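(* For any subset $A\subset E$ and any edge $k\in E$, (i) $D_kB_A^c=\sqrt{pq}\,\mathbf 1\{k\in A\}\,B_{A\setminus\{k\}}$; (ii) $-D_kL^{-1}B_A^c=\sqrt{pq}\,\mathbf 1\{k\in A\}\sum_{\{k\}\subset\alpha\subset A}\dfrac{p^{|A|-|\alpha|}}{|A|\binom{|A|-1}{|\alpha|-1}}B_{\alpha\setminus\{k\}}$. In particular, all these expressions are non-negative.
   Context: $E$ is the (finite) set of all $\binom n2$ possible edges on $n$ vertices, $p\in(0,1)$, $q=1-p$. $(X_k)_{k\in E}$ are independent Rademacher variables with $\mathbb{P}(X_k=1)=p$. $B_k=\frac12(X_k+1)$, $Y_k=(pq)^{-1/2}(B_k-p)$; for $A\subset E$, $B_A=\prod_{k\in A}B_k$, $Y_A=\prod_{k\in A}Y_k$ ($B_\emptyset=Y_\emptyset=1$), and $Z^c:=Z-\mathbb{E}[Z]$. The discrete gradient is $D_kF=\sqrt{pq}(F_k^+-F_k^-)$, where $F_k^\pm$ is $F$ with $X_k$ set to $\pm1$. Every functional $F$ of $(X_k)$ can be written $F=\mathbb{E}F+\sum_{\emptyset\ne\alpha\subset E}c_\alpha Y_\alpha$, and the pseudo-inverse Ornstein–Uhlenbeck operator is $L^{-1}F=-\sum_{\emptyset\neq\alpha\subset E}\frac{c_\alpha}{|\alpha|}Y_\alpha$. *)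

(* Defs.v *)
From HB Require Import structures.
From mathcomp Require Import all_boot all_order all_algebra.
From Stdlib Require Import ClassicalEpsilon.
Set Implicit Arguments. Unset Strict Implicit. Unset Printing Implicit Defensive.
Import Order.TTheory GRing.Theory Num.Theory.
Local Open Scope ring_scope.

Definition edge (n : nat) : predArgType := {e : {set 'I_n} | #|e| == 2%N}.
HB.instance Definition _ n := Finite.on (edge n).

Section Defs.
Variables (R : rcfType) (E : finType) (p : R).

Definition q : R := 1 - p.

(* A configuration w : E -> bool; w k = true  <->  X_k = 1. *)
Definition config := {ffun E -> bool}.

Definition functional := config -> R.

Definition Xv (k : E) : functional := fun w => if w k then 1 else -1.
Definition Bv (k : E) : functional := fun w => (Xv k w + 1) / 2.
Definition Yv (k : E) : functional := fun w => (Num.sqrt (p * q))^-1 * (Bv k w - p).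
Definition BA (A : {set E}) : functional := fun w => \prod_(k in A) Bv k w.
Definition YA (A : {set E}) : functional := fun w => \prod_(k in A) Yv k w.

Definition weight (w : config) : R := \prod_(k : E) (if w k then p else q).
Definition Expect (F : functional) : R := \sum_(w : config) weight w * F w.
Definition centered (F : functional) : functional := fun w => F w - Expect F.

Definition setk (w : config) (k : E) (b : bool) : config :=
  [ffun j => if j == k then b else w j].
Definition D (k : E) (F : functional) : functional :=
  fun w => Num.sqrt (p * q) * (F (setk w k true) - F (setk w k false)).

Definition is_chaos_coef (F : functional) (c : {set E} -> R) : Prop :=
  forall w, F w = Expect F + \sum_(a : {set E} | a != set0) c a * YA a w.

Definition chaos_coef (F : functional) : {set E} -> R :=
  epsilon (inhabits (fun _ => 0)) (is_chaos_coef F).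

(* Pseudo-inverse of the Ornstein-Uhlenbeck operator. *)
Definition Linv (F : functional) : functional :=
  fun w => - \sum_(a : {set E} | a != set0) (chaos_coef F a / #|a|%:R) * YA a w.

End Defs.

(* Main.v *)
Require Import Defs.
From HB Require Import structures.
From mathcomp Require Import all_boot all_order all_algebra.
From mathcomp Require Import ring lra.
From Stdlib Require Import ClassicalEpsilon.
From mathcomp Require Import zify.
Import Order.TTheory GRing.Theory Num.Theory.
Local Open Scope ring_scope.

Section S.
Variables (R : rcfType) (E : finType) (p : R).
Hypotheses (hp0 : 0 < p) (hp1 : p < 1).

Local Notation s := (Num.sqrt (p * q p)).

Definition bv (b : bool) : R := ((if b then 1 else -1) + 1) / 2.
Definition yv (b : bool) : R := s^-1 * (bv b - p).

Lemma bvT : bv true = 1.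
Proof. by rewrite /bv -[1 + 1]/(2%:R) divff // pnatr_eq0. Qed.
Lemma bvF : bv false = 0.
Proof. by rewrite /bv addNr mul0r. Qed.

Lemma q_gt0 : 0 < q p. Proof. by rewrite /q subr_gt0. Qed.
Lemma s_gt0 : 0 < s.
Proof. by rewrite sqrtr_gt0 mulr_gt0 // q_gt0. Qed.
Lemma s_neq0 : s != 0. Proof. by rewrite gt_eqF // s_gt0. Qed.
Lemma ss : s * s = p * (1 - p).
Proof. by rewrite -expr2 sqr_sqrtr // mulr_ge0 // ?ltW // q_gt0. Qed.

Lemma yvT : yv true = s^-1 * (1 - p). Proof. by rewrite /yv bvT. Qed.
Lemma yvF : yv false = s^-1 * (- p). Proof. by rewrite /yv bvF sub0r. Qed.

Lemma Expect_ext (F G : functional R E) : F =1 G -> Expect p F = Expect p G.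
Proof. by move=> FG; apply: eq_bigr => w _; rewrite FG. Qed.

Lemma expect_prod (g : E -> bool -> R) :
  Expect p (fun w => \prod_k g k (w k)) = \prod_k (p * g k true + q p * g k false).
Proof.
rewrite /Expect /weight.
transitivity (\sum_(w : config E) \prod_k ((if w k then p else q p) * g k (w k))).
  by apply: eq_bigr => w _; rewrite big_split.
rewrite -(bigA_distr_bigA (fun k b => (if b then p else q p) * g k b)).
by apply: eq_bigr => k _; rewrite big_bool.
Qed.

Lemma expect_prodE (F : functional R E) (g : E -> bool -> R) :
  (forall w, F w = \prod_k g k (w k)) ->
  Expect p F = \prod_k (p * g k true + q p * g k false).
Proof. by move=> H; rewrite (@Expect_ext _ _ H) expect_prod. Qed.

Lemma Expect1 : Expect p (fun _ : config E => 1) = 1.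
Proof.
rewrite (@expect_prodE _ (fun _ _ => 1)); last by move=> w; rewrite big1.
rewrite big1 // => k _; rewrite !mulr1 /q; ring.
Qed.

Lemma sum_weight : \sum_(w : config E) weight p w = 1.
Proof. rewrite -Expect1 /Expect; apply: eq_bigr => w _; by rewrite mulr1. Qed.

Lemma Expect_add (F G : functional R E) :
  Expect p (fun w => F w + G w) = Expect p F + Expect p G.
Proof. by rewrite /Expect -big_split; apply: eq_bigr => w _; rewrite mulrDr. Qed.

Lemma Expect_scale c (F : functional R E) :
  Expect p (fun w => c * F w) = c * Expect p F.
Proof. by rewrite /Expect big_distrr; apply: eq_bigr => w _; rewrite mulrCA. Qed.

Lemma Expect_sum (I : finType) (P : pred I) (F : I -> functional R E) :
  Expect p (fun w => \sum_(i | P i) F i w) = \sum_(i | P i) Expect p (F i).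
Proof.
rewrite /Expect; under eq_bigr do rewrite big_distrr.
by rewrite exchange_big.
Qed.

Lemma Expect_centered (F : functional R E) : Expect p (centered p F) = 0.
Proof.
rewrite /centered /Expect.
under eq_bigr do rewrite mulrBr.
by rewrite sumrB -big_distrl /= sum_weight mul1r subrr.
Qed.

Lemma YA_prod (a : {set E}) w : YA p a w = \prod_k (if k \in a then yv (w k) else 1).
Proof. by rewrite /YA big_mkcond. Qed.
Lemma BA_prod (a : {set E}) w : BA R a w = \prod_k (if k \in a then bv (w k) else 1).
Proof. by rewrite /BA big_mkcond. Qed.

Lemma orth (a b : {set E}) : Expect p (fun w => YA p a w * YA p b w) = (a == b)%:R.
Proof.
rewrite (@expect_prodE _ (fun k x =>
   (if k \in a then yv x else 1) * (if k \in b then yv x else 1))); last first.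
  by move=> w; rewrite !YA_prod -big_split.
rewrite yvT yvF.
have hs := ss; have sn := s_neq0.
set t := Num.sqrt _ in hs sn *.
rewrite /q.
have ht : t^-1 * t^-1 * (p * (1 - p)) = 1.
  by rewrite -hs; field.
have [->|neq] := eqVneq a b.
  rewrite big1 // => k _; case: (k \in b); last by ring.
  by transitivity (t^-1 * t^-1 * (p * (1 - p))); first ring.
have [k hk] : exists k, (k \in a) != (k \in b).
  apply/existsP; apply: contraNT neq => /existsPn H; apply/eqP/setP => k.
  by move: (H k); rewrite negbK => /eqP.
rewrite (bigD1 k) //=; move: hk; case: (k \in a); case: (k \in b) => //= _;
  rewrite ?mulr1 ?mul1r; apply/eqP; rewrite mulf_eq0; apply/orP; left; apply/eqP; ring.
Qed.

Lemma prod_expand (A : {set E}) (x y : E -> R) :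
  \prod_(k in A) (x k + y k) =
  \sum_(a : {set E} | a \subset A) (\prod_(k in a) y k) * \prod_(k in A :\: a) x k.
Proof.
rewrite big_mkcond /=.
transitivity (\prod_k \sum_(b : bool)
   (if b then (if k \in A then y k else 0) else (if k \in A then x k else 1))).
  by apply: eq_bigr => k _; rewrite big_bool /=; case: (k \in A); rewrite ?add0r // addrC.
rewrite (bigA_distr_bigA (fun k (b : bool) =>
   (if b then (if k \in A then y k else 0) else (if k \in A then x k else 1)))) /=.
rewrite (reindex (fun a : {set E} => [ffun k => k \in a])) /=; last first.
  exists (fun f : {ffun E -> bool} => [set k | f k]) => [a _ | f _].
    by apply/setP => k; rewrite inE ffunE.
  by apply/ffunP => k; rewrite ffunE inE.
rewrite [RHS]big_mkcond; apply: eq_bigr => a _.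
under eq_bigr do rewrite ffunE.
case: (boolP (a \subset A)) => haA.
  rewrite (bigID (mem a)) /=; congr (_ * _).
    by apply: eq_bigr => k ka; rewrite ka (subsetP haA k ka).
  rewrite [RHS]big_mkcond [LHS]big_mkcond; apply: eq_bigr => k _ /=.
  by rewrite in_setD; case: (k \in a); case: (k \in A).
have [k ka kA] := subsetPn haA.
by rewrite (bigD1 k) //= ka (negbTE kA) mul0r.
Qed.

Definition cA (A a : {set E}) : R :=
  if a \subset A then s ^+ #|a| * p ^+ (#|A| - #|a|) else 0.

Lemma BA_exp (A : {set E}) w : BA R A w = \sum_(a : {set E}) cA A a * YA p a w.
Proof.
have sn := s_neq0.
transitivity (\prod_(k in A) (p + s * yv (w k))).
  by apply: eq_bigr => k _; rewrite /yv mulVKf // addrC subrK.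
rewrite prod_expand big_mkcond; apply: eq_bigr => a _ /=.
rewrite /cA; case: ifP => [haA|_]; last by rewrite mul0r.
rewrite big_split /= prodr_const prodr_const cardsDS // /YA.
by rewrite mulrAC.
Qed.

Lemma YA0 w : YA p (set0 : {set E}) w = 1.
Proof. by rewrite /YA big_set0. Qed.

Lemma EYA (a : {set E}) : Expect p (YA p a) = (set0 == a)%:R.
Proof.
rewrite -orth; apply: Expect_ext => w; by rewrite YA0 mul1r.
Qed.

Lemma coef_unique (F : functional R E) c : is_chaos_coef p F c ->
  forall b, b != set0 -> c b = Expect p (fun w => F w * YA p b w).
Proof.
move=> H b nb.
rewrite (@Expect_ext _ (fun w => Expect p F * YA p b w +
   \sum_(a : {set E} | a != set0) c a * (YA p a w * YA p b w))); last first.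
  move=> w; rewrite H mulrDl; congr (_ + _).
  rewrite big_distrl /=; by apply: eq_bigr => a _; rewrite mulrA.
rewrite Expect_add Expect_scale EYA eq_sym (negbTE nb) mulr0 add0r.
rewrite Expect_sum (bigD1 b) //= big1 ?addr0.
  by rewrite Expect_scale orth eqxx mulr1.
move=> a /andP [_ ab]; by rewrite Expect_scale orth (negbTE ab) mulr0.
Qed.

Lemma chaos_coefE (F : functional R E) c : is_chaos_coef p F c ->
  forall b, b != set0 -> chaos_coef p F b = c b.
Proof.
move=> H b nb.
have H' : is_chaos_coef p F (chaos_coef p F).
  by rewrite /chaos_coef; apply: epsilon_spec; exists c.
by rewrite (@coef_unique F _ H' b nb) (@coef_unique F _ H b nb).
Qed.

Lemma Expect_BA (A : {set E}) : Expect p (BA R A) = p ^+ #|A|.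
Proof.
rewrite (@Expect_ext _ _ (BA_exp A)) Expect_sum (bigD1 set0) //= big1 ?addr0.
  by rewrite Expect_scale EYA eqxx mulr1 /cA sub0set cards0 expr0 mul1r subn0.
move=> a na; by rewrite Expect_scale EYA eq_sym (negbTE na) mulr0.
Qed.

Lemma chaos_BA (A : {set E}) : is_chaos_coef p (centered p (BA R A)) (cA A).
Proof.
move=> w; rewrite Expect_centered add0r /centered Expect_BA BA_exp (bigD1 set0) //=.
by rewrite YA0 mulr1 /cA sub0set cards0 expr0 mul1r subn0 addrAC subrr add0r.
Qed.

Lemma setk_ne (w : config E) k b j : j != k -> setk w k b j = w j.
Proof. by move=> jk; rewrite /setk ffunE (negbTE jk). Qed.
Lemma setk_k (w : config E) k b : setk w k b k = b.
Proof. by rewrite /setk ffunE eqxx. Qed.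

Lemma BA_setk_in (A : {set E}) k w b : k \in A ->
  BA R A (setk w k b) = bv b * BA R (A :\ k) w.
Proof.
move=> kA; rewrite /BA (bigD1 k) //=; congr (_ * _).
  by rewrite /Bv /Xv setk_k.
apply: eq_big => [j | j /andP [jA jk]]; first by rewrite in_setD1 andbC.
by rewrite /Bv /Xv setk_ne.
Qed.

Lemma BA_setk_out (A : {set E}) k w b : k \notin A ->
  BA R A (setk w k b) = BA R A w.
Proof.
move=> kA; rewrite /BA; apply: eq_bigr => j jA.
have jk : j != k by apply: contraNneq kA => <-.
by rewrite /Bv /Xv setk_ne.
Qed.

Lemma YA_setk_in (A : {set E}) k w b : k \in A ->
  YA p A (setk w k b) = yv b * YA p (A :\ k) w.
Proof.
move=> kA; rewrite /YA (bigD1 k) //=; congr (_ * _).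
  by rewrite /Yv /Bv /Xv setk_k.
apply: eq_big => [j | j /andP [jA jk]]; first by rewrite in_setD1 andbC.
by rewrite /Yv /Bv /Xv setk_ne.
Qed.

Lemma YA_setk_out (A : {set E}) k w b : k \notin A ->
  YA p A (setk w k b) = YA p A w.
Proof.
move=> kA; rewrite /YA; apply: eq_bigr => j jA.
have jk : j != k by apply: contraNneq kA => <-.
by rewrite /Yv /Bv /Xv setk_ne.
Qed.

Lemma part_i (A : {set E}) k w :
  D p k (centered p (BA R A)) w = s * (k \in A)%:R * BA R (A :\ k) w.
Proof.
rewrite /D /centered; case: (boolP (k \in A)) => kA.
  rewrite !BA_setk_in // bvT bvF /=; ring.
rewrite !BA_setk_out // /=; ring.
Qed.

Lemma YA_diff (a : {set E}) k w :
  YA p a (setk w k true) - YA p a (setk w k false) = (k \in a)%:R * s^-1 * YA p (a :\ k) w.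
Proof.
case: (boolP (k \in a)) => ka.
  rewrite !YA_setk_in // yvT yvF /=; ring.
rewrite !YA_setk_out // /=; ring.
Qed.

Lemma part_ii_Y (A : {set E}) k w :
  - D p k (Linv p (centered p (BA R A))) w =
  \sum_(a : {set E} | (k \in a) && (a \subset A))
      s ^+ #|a| * p ^+ (#|A| - #|a|) / #|a|%:R * YA p (a :\ k) w.
Proof.
rewrite /D /Linv.
have e : forall x y : R, - (s * (- x - - y)) = s * (x - y) by move=> x y; ring.
rewrite e -sumrB big_distrr /= big_mkcond [RHS]big_mkcond; apply: eq_bigr => a _ /=.
case: (eqVneq a set0) => [->|na]; first by rewrite in_set0.
rewrite /= (@chaos_coefE _ _ (chaos_BA A) a na) -mulrBr YA_diff /cA.
case: (boolP (k \in a)) => ka; case: (boolP (a \subset A)) => aA /=;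
  rewrite ?mul0r ?mulr0 ?mul0r //.
by rewrite mul1r mulrCA mulVKf // s_neq0.
Qed.

Lemma sum_by_card (D0 : {set E}) (g : nat -> R) :
  \sum_(c : {set E} | c \subset D0) g #|c| =
  \sum_(j < #|D0|.+1) 'C(#|D0|, j)%:R * g j.
Proof.
rewrite (partition_big (fun c : {set E} => (inord #|c| : 'I_(#|D0|.+1))) xpredT) //=.
apply: eq_bigr => j _.
transitivity (\sum_(c in [set c : {set E} | c \subset D0 & #|c| == j]) g j).
  apply: eq_big => [c | c /andP [cD /eqP <-]].
    rewrite inE; case cD: (c \subset D0) => //=.
    by rewrite -val_eqE /= inordK // ltnS subset_leq_card.
  by rewrite inordK // ltnS subset_leq_card.
by rewrite sumr_const cards_draws mulr_natl.
Qed.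

Lemma sum_super (b D0 : {set E}) (f : nat -> R) : b \subset D0 ->
  \sum_(c : {set E} | (b \subset c) && (c \subset D0)) f #|c| =
  \sum_(c : {set E} | c \subset D0 :\: b) f (#|b| + #|c|)%N.
Proof.
move=> bD.
rewrite (reindex_onto (fun c => b :|: c) (fun c => c :\: b)) /=; last first.
  move=> c /andP [bc _]; apply/setP => x; rewrite !inE.
  by case: (boolP (x \in b)) => xb //=; rewrite (subsetP bc).
apply: eq_big => [c | c /andP [/andP [_ _] /eqP hc]].
  apply/idP/idP.
    move=> /andP [/andP [_ h2] /eqP h3]; apply/subsetP => x xc.
    have : x \in (b :|: c) :\: b by rewrite h3.
    rewrite !inE => /andP [xb _]; rewrite xb /=.
    by apply: (subsetP h2); rewrite inE xc orbT.
  move=> cD; rewrite subsetUl subUset bD (subset_trans cD (subsetDl _ _)) /=.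
  apply/eqP/setP => x; rewrite !inE; case: (boolP (x \in b)) => xb //=.
  apply/esym/negbTE; apply/negP => xc; move: (subsetP cD x xc); by rewrite inE xb.
rewrite cardsU; have -> : b :&: c = set0.
  apply/setP => x; rewrite !inE; case xb: (x \in b) => //=.
  by rewrite -hc !inE xb.
by rewrite cards0 subn0.
Qed.

Lemma frac_swap (a c X Y M : R) : X != 0 -> Y != 0 -> M != 0 ->
  X * c = Y * a -> a / (M * X) = c / (M * Y).
Proof.
move=> hX hY hM h.
have ha : a = X * c / Y by rewrite h mulrAC divff // mul1r.
rewrite ha; field.
by rewrite hX hY hM.
Qed.

Lemma binC_swap t r j : (j <= r)%N ->
  ('C(t + r, t + j) * 'C(t + j, t) = 'C(t + r, t) * 'C(r, j))%N.
Proof.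
move=> jr.
have h1 := bin_fact (leq_addr j t).
have h2 : ('C(t + r, t + j) * ((t + j)`! * (t + r - (t + j))`!))%N = (t + r)`!.
  by apply: bin_fact; rewrite leq_add2l.
have h3 := bin_fact jr.
have h4 := bin_fact (leq_addr r t).
rewrite addKn in h1; rewrite addKn in h4; rewrite subnDl in h2.
apply/eqP; rewrite -(eqn_pmul2r (_ : (0 < t`! * j`! * (r - j)`!)%N)); last first.
  by rewrite !muln_gt0 !fact_gt0.
apply/eqP.
have -> : ('C(t + r, t + j) * 'C(t + j, t) * (t`! * j`! * (r - j)`!) =
   'C(t + r, t + j) * (('C(t + j, t) * (t`! * j`!)) * (r - j)`!))%N by ring.
rewrite h1 h2.
have -> : ('C(t + r, t) * 'C(r, j) * (t`! * j`! * (r - j)`!) =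
   'C(t + r, t) * (t`! * ('C(r, j) * (j`! * (r - j)`!))))%N by ring.
by rewrite h3 h4.
Qed.

Lemma hockey t r : (\sum_(j < r.+1) 'C(t + j, t) = 'C((t + r).+1, t.+1))%N.
Proof.
elim: r => [|r IH]; first by rewrite big_ord1 !addn0 !binn.
by rewrite big_ord_recr /= IH !addnS binS.
Qed.

Lemma num_id t r : \sum_(j < r.+1) 'C(r, j)%:R / (((t + r).+1)%:R * 'C(t + r, t + j)%:R)
   = ((t.+1)%:R)^-1 :> R.
Proof.
have Cm0 : 'C(t + r, t)%:R != 0 :> R by rewrite pnatr_eq0 -lt0n bin_gt0 leq_addr.
have M0 : ((t + r).+1)%:R != 0 :> R by rewrite pnatr_eq0.
transitivity (\sum_(j < r.+1) 'C(t + j, t)%:R / (((t + r).+1)%:R * 'C(t + r, t)%:R) : R).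
  apply: eq_bigr => j _.
  have jr : (j <= r)%N by rewrite -ltnS.
  have X0 : 'C(t + r, t + j)%:R != 0 :> R by rewrite pnatr_eq0 -lt0n bin_gt0 leq_add2l.
  apply: frac_swap => //.
  by rewrite -!natrM binC_swap.
rewrite -big_distrl /= -natr_sum hockey.
have hd := mul_bin_diag (t + r).+1 t; rewrite /= in hd.
rewrite -natrM hd natrM invfM mulrCA mulfV ?mulr1 //.
by rewrite pnatr_eq0 -lt0n bin_gt0 ltnS leq_addr.
Qed.

Lemma comb_id (b D0 : {set E}) : b \subset D0 ->
  \sum_(c : {set E} | (b \subset c) && (c \subset D0))
     ((#|D0|.+1)%:R * 'C(#|D0|, #|c|)%:R)^-1 = ((#|b|.+1)%:R)^-1 :> R.
Proof.
move=> bD.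
rewrite (@sum_super b D0 (fun n => ((#|D0|.+1)%:R * 'C(#|D0|, n)%:R)^-1) bD).
rewrite (@sum_by_card (D0 :\: b) (fun n => ((#|D0|.+1)%:R * 'C(#|D0|, #|b| + n)%:R)^-1)).
rewrite cardsDS //.
have hD : #|D0| = (#|b| + (#|D0| - #|b|))%N by rewrite subnKC // subset_leq_card.
move: hD; set r := (#|D0| - #|b|)%N => hD; rewrite hD.
rewrite -(num_id #|b| r); apply: eq_bigr => j _; by rewrite mulrC.
Qed.

Lemma reidx (A : {set E}) k (G : {set E} -> R) : k \in A ->
  \sum_(a : {set E} | (k \in a) && (a \subset A)) G a =
  \sum_(b : {set E} | b \subset A :\ k) G (k |: b).
Proof.
move=> kA; rewrite (reindex_onto (fun b => k |: b) (fun a => a :\ k)) /=; last first.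
  by move=> a /andP [ka _]; rewrite setD1K.
apply: eq_bigl => b; rewrite setU11 /= subUset sub1set kA /= subsetD1.
case: (boolP (k \in b)) => kb /=; last by rewrite setU1K // eqxx.
have : (k |: b) :\ k != b by apply/eqP => h; move: kb; rewrite -h !inE eqxx.
by move/negbTE => ->; rewrite !andbF.
Qed.

Lemma coef_sum (A' b : {set E}) :
  \sum_(c : {set E} | c \subset A')
     p ^+ (#|A'| - #|c|) / ((#|A'|.+1)%:R * 'C(#|A'|, #|c|)%:R) * cA c b =
  if b \subset A' then s ^+ #|b| * p ^+ (#|A'| - #|b|) / (#|b|.+1)%:R else 0.
Proof.
case: ifP => bA; last first.
  apply: big1 => c cA'; rewrite /cA; case: ifP => [bc|_]; last by rewrite mulr0.
  by move: bA; rewrite (subset_trans bc cA').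
transitivity (\sum_(c : {set E} | (b \subset c) && (c \subset A'))
   s ^+ #|b| * p ^+ (#|A'| - #|b|) * ((#|A'|.+1)%:R * 'C(#|A'|, #|c|)%:R)^-1).
  rewrite [RHS]big_mkcondl /=; apply: eq_bigr => c cA'.
  rewrite /cA; case: ifP => bc; last by rewrite mulr0.
  have h1 := subset_leq_card bc; have h2 := subset_leq_card cA'.
  have -> : (#|A'| - #|b| = (#|A'| - #|c|) + (#|c| - #|b|))%N by lia.
  rewrite exprD; ring.
by rewrite -big_distrr /= comb_id.
Qed.

Lemma part_ii (A : {set E}) k w :
  - D p k (Linv p (centered p (BA R A))) w =
     s * (k \in A)%:R *
     \sum_(a : {set E} | (k \in a) && (a \subset A))
        p ^+ (#|A| - #|a|) / (#|A|%:R * 'C(#|A|.-1, #|a|.-1)%:R) * BA R (a :\ k) w.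
Proof.
rewrite part_ii_Y.
case: (boolP (k \in A)) => kA; last first.
  have P0 : forall a : {set E}, (k \in a) && (a \subset A) = false.
    move=> a; apply/negbTE/andP => [[ka aA]]; by move: kA; rewrite (subsetP aA k ka).
  by rewrite !big_pred0 // mulr0.
rewrite mulr1 !(@reidx A k _ kA).
set A' := A :\ k.
have hA : #|A| = (#|A'|).+1 by rewrite (cardsD1 k A) kA.
have kb : forall b : {set E}, b \subset A' -> k \notin b.
  by move=> b; rewrite /A' subsetD1 => /andP [].
rewrite (eq_bigr (fun b : {set E} => s * (s ^+ #|b| * p ^+ (#|A'| - #|b|) / (#|b|.+1)%:R * YA p b w)));
  last first.
  move=> b bA; rewrite cardsU1 (kb _ bA) setU1K ?kb // hA subSS exprS; ring.
rewrite [in RHS](eq_bigr (fun b : {set E} => p ^+ (#|A'| - #|b|) / ((#|A'|.+1)%:R * 'C(#|A'|, #|b|)%:R) *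
    \sum_(c : {set E}) cA b c * YA p c w)); last first.
  move=> b bA; rewrite cardsU1 (kb _ bA) setU1K ?kb // hA subSS /= ?add0n BA_exp //.
rewrite -big_distrr /=; congr (_ * _).
under [RHS]eq_bigr do rewrite big_distrr /=.
rewrite exchange_big /=.
rewrite big_mkcond /=; apply: eq_bigr => c _.
transitivity ((\sum_(i : {set E} | i \subset A')
   p ^+ (#|A'| - #|i|) / ((#|A'|.+1)%:R * 'C(#|A'|, #|i|)%:R) * cA i c) * YA p c w);
  last by rewrite big_distrl /=; apply: eq_bigr => i _; ring.
by rewrite coef_sum; case: ifP => _ //; rewrite mul0r.
Qed.

Lemma BA_ge0 (A : {set E}) w : 0 <= BA R A w.
Proof.
rewrite /BA; apply: prodr_ge0 => j _.
have : 0 <= bv (w j) by case: (w j); rewrite ?bvT ?bvF.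
by [].
Qed.
End S.

Theorem lemma5p1 (R : rcfType) (n : nat) (p : R) (hp0 : 0 < p) (hp1 : p < 1)
    (A : {set edge n}) (k : edge n) :
  let sq := Num.sqrt (p * q p) in
  (* (i) *)
  (forall w, D p k (centered p (BA R A)) w = sq * (k \in A)%:R * BA R (A :\ k) w)
  /\
  (* (ii) *)
  (forall w, - D p k (Linv p (centered p (BA R A))) w =
     sq * (k \in A)%:R *
     \sum_(a : {set edge n} | (k \in a) && (a \subset A))
        p ^+ (#|A| - #|a|) / (#|A|%:R * 'C(#|A|.-1, #|a|.-1)%:R) * BA R (a :\ k) w)
  /\
  (* non-negativity *)
  (forall w, 0 <= D p k (centered p (BA R A)) w)
  /\
  (forall w, 0 <= - D p k (Linv p (centered p (BA R A))) w).
Proof.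
move=> sq.
have sq0 : 0 <= sq by rewrite /sq sqrtr_ge0.
split; [|split; [|split]] => w.
- exact: part_i.
- exact: (@part_ii R _ p hp0 hp1).
- rewrite part_i; apply: mulr_ge0; [apply: mulr_ge0 => //; exact: ler0n | exact: BA_ge0].
- rewrite (@part_ii R _ p hp0 hp1 A k w); apply: mulr_ge0; first by apply: mulr_ge0 => //; exact: ler0n.
  apply: sumr_ge0 => a _; apply: mulr_ge0; last exact: BA_ge0.
  apply: divr_ge0; first by apply: exprn_ge0; apply: ltW.
  by apply: mulr_ge0; exact: ler0n.
Qed.
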